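(* Let $n\geqslant 2$, let $A$ be a real symmetric $n\times n$ matrix with eigenvalues $\lambda_1(A)\geqslant\lambda_2(A)\geqslant\dots\geqslant\lambda_n(A)$, and let $X_A:=\{x\in\mathbb{R}^n: xx^\top-A\succeq 0\}$. Then $X_A\neq\emptyset$ if and only if $\lambda_2(A)\leqslant 0$.
   Context: $B\succeq 0$ means the symmetric matrix $B$ is positive semidefinite. *)

(* Defs.v *)
From HB Require Import structures.
From mathcomp Require Import all_boot all_order all_algebra.
From mathcomp Require Import reals.
Set Implicit Arguments. Unset Strict Implicit. Unset Printing Implicit Defensive.
Import Order.TTheory GRing.Theory Num.Theory.
Local Open Scope ring_scope.

Definition psdmx (R : realType) (n : nat) (B : 'M[R]_n) : Prop :=
  B^T = B /\ forall v : 'cV[R]_n, 0 <= (v^T *m B *m v) 0 0.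

(* s = [:: λ_1(A); ...; λ_n(A)] is the list of eigenvalues of A counted with
   (algebraic) multiplicity, i.e. the roots of the characteristic polynomial,
   sorted in non-increasing order. *)
Definition eigenvalues_desc (R : realType) (n : nat) (A : 'M[R]_n) (s : seq R) : Prop :=
  size s = n /\ sorted (fun a b => b <= a) s /\
  char_poly A = \prod_(a <- s) ('X - a%:P).

Definition X_set (R : realType) (n : nat) (A : 'M[R]_n) : 'cV[R]_n -> Prop :=
  fun x => psdmx (x *m x^T - A).

(* Main.v *)
Require Import Defs.
From HB Require Import structures.
From mathcomp Require Import all_boot all_order all_algebra.
From mathcomp Require Import reals.
From mathcomp Require Import complex.
From mathcomp Require Import ring lra.
Import Order.TTheory GRing.Theory Num.Theory.
Local Open Scope ring_scope.

Section Helpers.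
Import Num.Def.
Local Open Scope sesquilinear_scope.
Set Implicit Arguments. Unset Strict Implicit.

Lemma char_poly_conj (F : comNzRingType) n (Q Q' B : 'M[F]_n) :
  Q' *m Q = 1%:M -> char_poly (Q' *m B *m Q) = char_poly B.
Proof.
move=> QQ.
rewrite /char_poly /char_poly_mx !map_mxM.
set Qp := map_mx polyC Q; set Q'p := map_mx polyC Q'.
have QQp : Q'p *m Qp = 1%:M by rewrite -map_mxM QQ map_scalar_mx.
have E : ('X%:M : 'M_n) - Q'p *m map_mx polyC B *m Qp
    = Q'p *m ('X%:M - map_mx polyC B) *m Qp.
  by rewrite mulmxBr mulmxBl -(mulmxA Q'p 'X%:M) -scalar_mxC mulmxA QQp mul1mx.
rewrite E !det_mulmx mulrAC -det_mulmx QQp det1 mul1r //.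
Qed.
Lemma conj_real_mx (R : realType) m n (M : 'M[R]_(m,n)) :
  map_mx conjC (map_mx (real_complex R) M) = map_mx (real_complex R) M.
Proof. by apply/matrixP => i j; rewrite !mxE; apply: conjc_real. Qed.

Lemma real_spectral (R : realType) n (A : 'M[R]_n) s :
  A^T = A -> char_poly A = \prod_(a <- s) ('X - a%:P) ->
  exists P : 'M[R[i]]_n, exists dr : 'rV[R]_n,
    [/\ P \is unitarymx,
        map_mx (real_complex R) A = P^t* *m diag_mx (map_mx (real_complex R) dr) *m P
      & perm_eq s [seq dr 0 k | k <- enum 'I_n]].
Proof.
move=> sA cA.
set Ac := map_mx (real_complex R) A.
have hAc : Ac^t* = Ac.
  rewrite /Ac map_trmx sA. exact: conj_real_mx.
have nAc : Ac \is normalmx by apply/normalmxP; rewrite hAc.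
have := orthomx_spectralP nAc.
set P := spectralmx Ac; set d := spectral_diag Ac => AE.
have uP : P \is unitarymx by apply: spectral_unitarymx.
rewrite invmx_unitary // in AE.
have PP : P^t* *m P = 1%:M.
  by rewrite -invmx_unitary // mulVmx // unitarymx_unit.
have cAc : char_poly Ac = \prod_(a <- map (real_complex R) s) ('X - a%:P).
  rewrite -map_char_poly cA rmorph_prod big_map; apply: eq_bigr => a _.
  exact: map_polyXsubC.
have cD : char_poly Ac = \prod_(a <- [seq d 0 k | k <- enum 'I_n]) ('X - a%:P).
  rewrite AE char_poly_conj // char_poly_trig ?diag_mx_is_trig //.
  rewrite big_map big_enum /=; apply: eq_bigr => i _; rewrite mxE eqxx mulr1n //.
have pe := prod_XsubC_eq (etrans (esym cAc) cD).
have dreal : forall k, d 0 k = ((complex.Re (d 0 k))%:C)%C.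
  move=> k; have : d 0 k \in map (real_complex R) s.
    by rewrite (perm_mem pe); apply: map_f; rewrite mem_enum.
  by case/mapP => r _ ->.
exists P, (map_mx (@complex.Re R) d); split => //.
  have -> : map_mx (real_complex R) (map_mx (@complex.Re R) d) = d.
    by apply/matrixP => i j; rewrite !mxE ord1 -dreal.
  by [].
apply: (@perm_map_inj _ _ (real_complex R)); first exact: complexI.
rewrite -map_comp; apply: (perm_trans pe); apply/permPl.
rewrite (eq_map (g := (real_complex R \o (fun k => map_mx (@complex.Re R) d 0 k)))) //.
by move=> k /=; rewrite mxE -dreal.
Qed.
Lemma mx11E (F : pzSemiRingType) m (a : 'M[F]_(1,m)) (b : 'M[F]_(m,1)) :
  (a *m b) 0 0 = \sum_k a 0 k * b k 0.
Proof. by rewrite mxE. Qed.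

Lemma qform (R : realType) n (P : 'M[R[i]]_n) (dr : 'rV[R]_n) (v : 'cV[R[i]]_n) :
  (v^t* *m (P^t* *m diag_mx (map_mx (real_complex R) dr) *m P) *m v) 0 0
  = \sum_k ((dr 0 k)%:C)%C * `|(P *m v) k 0| ^+ 2.
Proof.
have -> : v^t* *m (P^t* *m diag_mx (map_mx (real_complex R) dr) *m P) *m v
   = (P *m v)^t* *m diag_mx (map_mx (real_complex R) dr) *m (P *m v).
  by rewrite trmx_mul map_mxM !mulmxA.
rewrite mx11E; apply: eq_bigr => k _.
rewrite mul_mx_diag !mxE normCKC; ring.
Qed.

Lemma real_qf (R : realType) n (M : 'M[R]_n) (v w : 'cV[R]_n) :
  (((v^T *m M *m w) 0 0)%:C)%C
  = ((map_mx (real_complex R) v)^t* *m map_mx (real_complex R) M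
       *m map_mx (real_complex R) w) 0 0.
Proof.
rewrite map_trmx conj_real_mx -!map_mxM; by rewrite [RHS]mxE.
Qed.

Lemma real_qfT (R : realType) n (M : 'M[R]_n) (v w : 'cV[R]_n) :
  (((v^T *m M *m w) 0 0)%:C)%C
  = ((map_mx (real_complex R) v)^T *m map_mx (real_complex R) M
       *m map_mx (real_complex R) w) 0 0.
Proof. by rewrite map_trmx -!map_mxM [RHS]mxE. Qed.

Lemma cpsd (R : realType) n (M : 'M[R]_n) : M^T = M ->
  (forall v : 'cV[R]_n, 0 <= (v^T *m M *m v) 0 0) ->
  forall v : 'cV[R[i]]_n, 0 <= (v^t* *m map_mx (real_complex R) M *m v) 0 0.
Proof.
move=> sM pM v.
set a := map_mx (@complex.Re R) v; set b := map_mx (@complex.Im R) v.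
set phi := real_complex R.
have vE : v = map_mx phi a + 'i%C *: map_mx phi b.
  apply/matrixP => i j; rewrite !mxE; exact: complexE.
have vtE : v^t* = (map_mx phi a)^T - 'i%C *: (map_mx phi b)^T.
  rewrite vE; apply/matrixP => i j; rewrite !mxE.
  rewrite rmorphD rmorphM /=.
  case: (v j i) => x y; rewrite /phi /=; apply/eqP; rewrite eq_complex /=; apply/andP; split; apply/eqP; ring.
have mT : forall x y : 'cV[R]_n, (map_mx phi x)^T *m map_mx phi M *m map_mx phi y
    = map_mx phi (x^T *m M *m y).
  by move=> x y; rewrite map_trmx -!map_mxM.
rewrite vtE {1}vE !mulmxBl !mulmxDr -!scalemxAl -!scalemxAr !mT.
have sab : a^T *m M *m b = b^T *m M *m a.
  have t1 : forall X : 'M[R]_1, X^T = X.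
    by move=> X; apply/matrixP => i j; rewrite !ord1 mxE.
  by rewrite -[LHS]t1 !trmx_mul trmxK sM mulmxA.
rewrite sab.
have := pM a; have := pM b.
set X1 := a^T *m M *m a; set X2 := b^T *m M *m b; set X3 := b^T *m M *m a.
rewrite !mxE => h2 h1.
set p := \sum_j (a^T *m M) 0 j * a j 0 in h1 *.
set q := \sum_j (b^T *m M) 0 j * b j 0 in h2 *.
set r := \sum_j (b^T *m M) 0 j * a j 0.
have -> : phi p + 'i%C * phi r - ('i%C * phi r + 'i%C * ('i%C * phi q)) = phi (p + q).
  rewrite /phi /=; apply/eqP; rewrite eq_complex /=; apply/andP; split; apply/eqP; ring.
by rewrite /phi ler0c addr_ge0.
Qed.
Lemma card_count (T : finType) (P : pred T) : #|[set k | P k]| = count P (enum T).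
Proof. by rewrite cardsE cardE -size_filter /enum_mem filter_predT. Qed.
Lemma sorted_head (R : realType) (s : seq R) :
  sorted (fun a b => b <= a) s -> forall r, r \in s -> r <= s`_0.
Proof.
case: s => [//|a t] /= /(order_path_min (fun y x z (h1 : y <= x) (h2 : z <= y) => le_trans h2 h1)).
move=> /allP H r; rewrite inE => /orP [/eqP -> //| /H //].
Qed.

Lemma sorted_two (R : realType) (s : seq R) : (2 <= size s)%N ->
  sorted (fun a b => b <= a) s ->
  [/\ s`_1 <= s`_0 & forall r, r \in drop 2 s -> r <= s`_1].
Proof.
case: s => [//|a [//|b t]] _ /= /andP [ba pt]; split => //.
move: pt => /(order_path_min (fun y x z (h1 : y <= x) (h2 : z <= y) => le_trans h2 h1)).
by move=> /allP H r; rewrite drop0 => /H.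
Qed.

Lemma count_le1 (R : realType) (s : seq R) : (2 <= size s)%N ->
  sorted (fun a b => b <= a) s -> s`_1 <= 0 -> (count (fun r : R => (0 < r)%R) s <= 1)%N.
Proof.
move=> hs so h1; have [h10 hd] := @sorted_two R s hs so.
move: hs so hd h1 h10; case: s => [//|a [//|b t]] _ _ /= hd h1 h10.
rewrite drop0 in hd.
have -> : count (fun r => 0 < r) t = 0%N.
  apply/eqP; rewrite -leqn0 leqNgt -has_count; apply/hasPn => r /hd rb.
  by rewrite -leNgt (le_trans rb h1).
by rewrite (ltNge 0 b) h1 /= addn0; case: (0 < a)%R.
Qed.

Lemma count_ge2 (R : realType) (s : seq R) : (2 <= size s)%N ->
  sorted (fun a b => b <= a) s -> 0 < s`_1 -> (2 <= count (fun r : R => (0 < r)%R) s)%N.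
Proof.
move=> hs so h1; have [h10 hd] := @sorted_two R s hs so.
move: hs so hd h1 h10; case: s => [//|a [//|b t]] _ _ /= hd h1 h10.
by rewrite h1 (lt_le_trans h1 h10).
Qed.
Lemma forward_aux (R : realType) n (P : 'M[R[i]]_n) (dr : 'rV[R]_n)
   (x : 'cV[R]_n) (A : 'M[R]_n) (i j : 'I_n) :
  P *m P^t* = 1%:M ->
  map_mx (real_complex R) A = P^t* *m diag_mx (map_mx (real_complex R) dr) *m P ->
  i != j -> 0 < dr 0 i -> 0 < dr 0 j ->
  (forall v : 'cV[R[i]]_n,
     0 <= (v^t* *m map_mx (real_complex R) (x *m x^T - A) *m v) 0 0) -> False.
Proof.
move=> PP' AE ij di dj H.
set phi := real_complex R.
set xc := map_mx phi x.
have Me : map_mx phi (x *m x^T - A) = xc *m xc^T - map_mx phi A.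
  by rewrite map_mxB map_mxM map_trmx.
set w := xc^T *m P^t*.
have [a [b [hab wz]]] : exists a b : R[i], (a != 0 \/ b != 0) /\ a * w 0 i + b * w 0 j = 0.
  case: (eqVneq (w 0 i) 0) => h.
    by exists 1, 0; split; [left; exact: oner_neq0 | rewrite h !mul0r mulr0 addr0].
  exists (w 0 j), (- w 0 i); split; first by right; rewrite oppr_eq0.
  by rewrite mulrC mulNr subrr.
set y : 'cV_n := a *: delta_mx i 0 + b *: delta_mx j 0.
set v := P^t* *m y.
have Pv : P *m v = y by rewrite /v mulmxA PP' mul1mx.
have xv : xc^T *m v = 0.
  rewrite /v mulmxA -/w /y mulmxDr -!scalemxAr -!colE.
  clearbody w; by apply/matrixP => p q; rewrite !ord1 !mxE wz.
have := H v; rewrite Me mulmxBr mulmxBl -!mulmxA xv !mulmx0 sub0r.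
have oppE : forall M : 'M[R[i]]_1, (- M) 0 0 = - M 0 0 by move=> M; rewrite mxE.
rewrite mulmxA oppE /phi AE qform Pv oppr_ge0.
move=> hle.
suff hlt : 0 < \sum_k ((dr 0 k)%:C)%C * `|y k 0| ^+ 2 by have := lt_le_trans hlt hle; rewrite ltxx.
have yk : forall k, y k 0 = a * (k == i)%:R + b * (k == j)%:R.
  by move=> k; rewrite !mxE !eqxx !andbT.
rewrite (bigD1 i) //= (bigD1 j) /=; last by rewrite eq_sym.
rewrite big1 ?addr0; last first.
  by move=> k /andP [ki kj]; rewrite yk (negPf ki) (negPf kj) !mulr0 addr0 normr0 expr0n /= mulr0.
rewrite !yk eqxx (negPf ij) eq_sym (negPf ij) !mulr1 !mulr0 addr0 add0r eqxx mulr1.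
have lt0 : forall (r : R) (c : R[i]), 0 < r -> c != 0 -> 0 < (r%:C)%C * `|c| ^+ 2.
  move=> r c r0 c0; apply: mulr_gt0; last by apply: exprn_gt0; rewrite normr_gt0.
  by rewrite (_ : 0 = (0%:C)%C) // ltcR.
have le0 : forall (r : R) (c : R[i]), 0 < r -> 0 <= (r%:C)%C * `|c| ^+ 2.
  move=> r c r0; apply: mulr_ge0; last by apply: exprn_ge0.
  by rewrite ler0c ltW.
case: hab => h.
  by apply: ltr_pwDl; [apply: lt0 | apply: le0].
by apply: ltr_wpDl; [apply: le0 | apply: lt0].
Qed.
Lemma backward_aux (R : realType) n (P : 'M[R[i]]_n) (dr : 'rV[R]_n)
   (A : 'M[R]_n) (u : 'cV[R]_n) (l : R) :
  P *m P^t* = 1%:M -> P^t* *m P = 1%:M ->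
  map_mx (real_complex R) A = P^t* *m diag_mx (map_mx (real_complex R) dr) *m P ->
  (#|[set k : 'I_n | (0 < dr 0 k)%R]| <= 1)%N -> (forall k : 'I_n, dr 0 k <= l) -> 0 < l ->
  A *m u = l *: u -> u != 0 ->
  forall v : 'cV[R]_n,
    (v^T *m A *m v) 0 0 <= l / (u^T *m u) 0 0 * ((u^T *m v) 0 0) ^+ 2.
Proof.
move=> PP' PP AE c1 drl l0 Au u0 v.
set phi := real_complex R.
set uc := map_mx phi u; set vc := map_mx phi v.
set y := P *m vc; set z := P *m uc.
have qA : (((v^T *m A *m v) 0 0)%:C)%C = \sum_k ((dr 0 k)%:C)%C * `|y k 0| ^+ 2.
  by rewrite real_qf AE qform.
have Dz : forall k, z k 0 != 0 -> dr 0 k = l.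
  move=> k zk.
  have e1 : diag_mx (map_mx phi dr) *m z = phi l *: z.
    have DP : diag_mx (map_mx phi dr) *m P = P *m map_mx phi A.
      by rewrite AE !mulmxA PP' mul1mx.
    by rewrite /z mulmxA DP -mulmxA -map_mxM Au map_mxZ -scalemxAr.
  clearbody z; have := congr1 (fun M : 'cV[R[i]]_n => M k 0) e1; rewrite mul_diag_mx !mxE => /mulIf => /(_ zk).
  exact: complexI.
have [k0 zk0] : exists k0, z k0 0 != 0.
  case: (pickP (fun k => z k 0 != 0)) => [k0 h|h]; first by exists k0.
  suff uc0 : uc = 0.
    exfalso; move/eqP: u0; apply; apply/matrixP => p q; rewrite mxE; apply: complexI.
    by have := congr1 (fun M : 'cV[R[i]]_n => M p q) uc0; rewrite !mxE.
  have z0 : z = 0.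
    by apply/matrixP => p q; rewrite [q]ord1 [RHS]mxE; move: (h p) => /negbFE/eqP.
  by rewrite -[uc]mul1mx -PP -mulmxA -/z z0 mulmx0.
have S1 : forall k, 0 < dr 0 k -> k = k0.
  move=> k dk; move/card_le1_eqP: c1 => H; by have := H k k0; rewrite !inE (Dz _ zk0) dk l0 => /(_ isT isT) ->.
have zk : forall k, k != k0 -> z k 0 = 0.
  move=> k kk0; apply/eqP; apply: contraNT kk0 => /Dz dk.
  by apply/eqP/S1; rewrite dk.
have drk : forall k, k != k0 -> dr 0 k <= 0.
  by move=> k kk0; rewrite leNgt; apply: contra kk0 => /S1 ->.
have zy : (z^t* *m y) 0 0 = (((u^T *m v) 0 0)%:C)%C.
  rewrite /z /y trmx_mul map_mxM -mulmxA (mulmxA (P^t*)) PP mul1mx.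
  by have := @real_qf R n 1%:M u v; rewrite !mulmx1 map_mx1 mulmx1.
have zz : (z^t* *m z) 0 0 = (((u^T *m u) 0 0)%:C)%C.
  rewrite /z trmx_mul map_mxM -mulmxA (mulmxA (P^t*)) PP mul1mx.
  by have := @real_qf R n 1%:M u u; rewrite !mulmx1 map_mx1 mulmx1.
clearbody y z.
set t := (u^T *m v) 0 0 in zy *; set nu := (u^T *m u) 0 0 in zz *.
have zy' : (z k0 0)^* * y k0 0 = (t%:C)%C.
  rewrite -zy mx11E (bigD1 k0) //= big1 ?addr0; first by rewrite !mxE.
  by move=> k kk0; rewrite !mxE zk // rmorph0 mul0r.
have zz' : `|z k0 0| ^+ 2 = (nu%:C)%C.
  rewrite -zz mx11E (bigD1 k0) //= big1 ?addr0; first by rewrite !mxE normCKC.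
  by move=> k kk0; rewrite !mxE zk // rmorph0 mul0r.
have nu0 : (nu%:C)%C != 0 :> R[i] by rewrite -zz' expf_neq0 // normr_eq0.
have yk0 : `|y k0 0| ^+ 2 = ((t ^+ 2)%:C)%C / (nu%:C)%C.
  apply: (mulIf nu0); rewrite mulfVK // -zz' -exprMn mulrC -(norm_conjC (z k0 0)) -normrM zy'.
  rewrite normCK (_ : conjC _ = (t%:C)%C); last exact: conjc_real.
  by rewrite -expr2 rmorphXn.
rewrite -lecR qA.
apply: (@le_trans _ _ (((dr 0 k0)%:C)%C * `|y k0 0| ^+ 2)).
  rewrite (bigD1 k0) //= gerDl; apply: sumr_le0 => k kk0.
  apply: mulr_le0_ge0; last exact: exprn_ge0.
  by rewrite (_ : 0 = (0%:C)%C) // lecR drk.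
rewrite Dz // yk0.
have -> : ((l / nu * t ^+ 2)%:C)%C = (l%:C)%C * (((t ^+ 2)%:C)%C / (nu%:C)%C).
  rewrite !rmorphM fmorphV /=; ring.
exact: lexx.
Qed.
Lemma nonpos_aux (R : realType) n (P : 'M[R[i]]_n) (dr : 'rV[R]_n) (A : 'M[R]_n) :
  map_mx (real_complex R) A = P^t* *m diag_mx (map_mx (real_complex R) dr) *m P ->
  (forall k : 'I_n, dr 0 k <= 0) ->
  forall v : 'cV[R]_n, (v^T *m A *m v) 0 0 <= 0.
Proof.
move=> AE dr0 v; rewrite -lecR real_qf AE qform; apply: sumr_le0 => k _.
apply: mulr_le0_ge0; last exact: exprn_ge0.
by rewrite (_ : 0 = (0%:C)%C) // lecR.
Qed.

Lemma nrm_ge0 (R : realType) n (u : 'cV[R]_n) : 0 <= (u^T *m u) 0 0.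
Proof. by rewrite mx11E; apply: sumr_ge0 => k _; rewrite mxE -expr2 sqr_ge0. Qed.

Lemma qf_outer (R : realType) n (x v : 'cV[R]_n) :
  (v^T *m (x *m x^T) *m v) 0 0 = ((x^T *m v) 0 0) ^+ 2.
Proof.
rewrite mulmxA -mulmxA mx11E big_ord1 expr2; congr (_ * _).
by rewrite -[v^T *m x]trmxK trmx_mul trmxK mxE.
Qed.

End Helpers.

Import Num.Def.
Local Open Scope sesquilinear_scope.

Theorem lemma1 (R : realType) (n : nat) (A : 'M[R]_n) (s : seq R) :
  (2 <= n)%N -> A^T = A -> eigenvalues_desc A s ->
  ((exists x : 'cV[R]_n, X_set A x) <-> s`_1 <= 0).
Proof.
move=> n2 sA [ss [so cA]].
have [P [dr [uP AE pe]]] := real_spectral sA cA.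
set phi := real_complex R.
have PP : P^t* *m P = 1%:M.
  by rewrite -invmx_unitary // mulVmx // unitarymx_unit.
have PP' : P *m P^t* = 1%:M by apply/unitarymxP.
have cnt : count (fun r : R => (0 < r)%R) s = #|[set k | 0 < dr 0 k]|.
  by rewrite (permP pe) count_map card_count.
have drs : forall k, dr 0 k \in s.
  by move=> k; rewrite (perm_mem pe); apply: map_f; rewrite mem_enum.
have drle : forall k, dr 0 k <= s`_0 by move=> k; apply: sorted_head.
have qA : forall v : 'cV[R]_n, (((v^T *m A *m v) 0 0)%:C)%C
    = \sum_k ((dr 0 k)%:C)%C * `|(P *m map_mx phi v) k 0| ^+ 2.
  by move=> v; rewrite real_qf AE qform.
have s2 : (2 <= size s)%N by rewrite ss.
split.
  move=> [x [sx px]]; rewrite leNgt; apply/negP => s1pos.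
  have c2 := count_ge2 s2 so s1pos; rewrite cnt in c2.
  case/card_gt1P: c2 => i [j [hi hj ij]].
  rewrite !inE in hi hj.
  by have := forward_aux (x:=x) PP' AE ij hi hj; apply; apply: cpsd sx px.
move=> s1le.
have psdE : forall x : 'cV[R]_n, (forall v : 'cV[R]_n, (v^T *m A *m v) 0 0 <= ((x^T *m v) 0 0) ^+ 2) ->
    X_set A x.
  move=> x H; split.
    by rewrite linearB /= trmx_mul trmxK sA.
  move=> v; rewrite mulmxBr mulmxBl.
  have subE : forall M N : 'M[R]_1, (M - N) 0 0 = M 0 0 - N 0 0 by move=> M N; rewrite !mxE.
  by rewrite subE subr_ge0 qf_outer.
case: (leP (s`_0) 0) => s0.
  exists 0; apply: psdE => v; rewrite trmx0 mul0mx.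
  rewrite (_ : (0 : 'M[R]_(1,1)) 0 0 = 0); last by rewrite mxE.
  rewrite expr0n /=.
  by apply: (nonpos_aux AE) => k; apply: le_trans (drle k) s0.
have : eigenvalue A s`_0.
  by rewrite eigenvalue_root_char cA root_prod_XsubC mem_nth // ss (leq_trans _ n2).
case/eigenvalueP => w wA w0.
set u := w^T.
have Au : A *m u = s`_0 *: u by rewrite /u -sA -trmx_mul wA linearZ.
have u0 : u != 0 by apply: contra w0 => /eqP /(congr1 trmx); rewrite trmxK trmx0 => ->.
have c1 : (#|[set k | (0 < dr 0 k)%R]| <= 1)%N by rewrite -cnt count_le1.
have bw := backward_aux PP' PP AE c1 drle s0 Au u0.
exists (Num.sqrt (s`_0 / (u^T *m u) 0 0) *: u); apply: psdE => v.
rewrite linearZ /= -scalemxAl [X in _ <= X ^+ 2]mxE exprMn sqr_sqrtr; first exact: bw.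
by apply: divr_ge0; [exact: ltW | exact: nrm_ge0].
Qed.
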